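(* There exists an absolute constant $c>0$ such that the following holds. Let $k'\ge0$ be an integer, let $y_1,y_2\in\mathbb R$ with $|y_1|,|y_2|\le c\,3^{-k'}$, and let $w_1,w_2\in\mathbb C$ satisfy $|w_j|=e^{y_j}$ ($j=1,2$) and $1+w_1+w_2=0$. Then for every integer $k$ with $1\le k\le k'+1$, $$\operatorname{Re}\big(1+w_1^{3^k}+w_2^{3^k}\big)\ge 2,\quad\text{in particular}\quad |1+w_1^{3^k}+w_2^{3^k}|\ge2.$$ *)

(* Defs.v *)
From Stdlib Require Import Reals.
Open Scope R_scope.

Record Cplx : Type := mkC { Re : R ; Im : R }.

Definition Czero : Cplx := mkC 0 0.
Definition Cone : Cplx := mkC 1 0.
Definition Cadd (z w : Cplx) : Cplx := mkC (Re z + Re w) (Im z + Im w).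
Definition Cmul (z w : Cplx) : Cplx :=
  mkC (Re z * Re w - Im z * Im w) (Re z * Im w + Im z * Re w).
Fixpoint Cpow (z : Cplx) (n : nat) : Cplx :=
  match n with
  | O => Cone
  | S m => Cmul z (Cpow z m)
  end.
Definition Cmod (z : Cplx) : R := sqrt (Re z ^ 2 + Im z ^ 2).

(* Main.v *)
Require Import Defs.
From Stdlib Require Import Reals Lra Lia Psatz.
Open Scope R_scope.

Definition D (z : Cplx) : R := Rabs (Re z - 1) + Rabs (Im z).

Lemma Cmul_assoc x y z : Cmul x (Cmul y z) = Cmul (Cmul x y) z.
Proof. destruct x, y, z; unfold Cmul; simpl; f_equal; ring. Qed.
Lemma Cmul_1_l x : Cmul Cone x = x.
Proof. destruct x; unfold Cmul, Cone; simpl; f_equal; ring. Qed.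

Lemma Cpow_add w n m : Cpow w (n + m) = Cmul (Cpow w n) (Cpow w m).
Proof.
  induction n; simpl. now rewrite Cmul_1_l.
  rewrite IHn. apply Cmul_assoc.
Qed.

Lemma Cpow_mul3 w m : Cpow w (3 * m) = Cpow (Cpow w 3) m.
Proof.
  induction m. simpl. reflexivity.
  replace (3 * S m)%nat with (3 + 3 * m)%nat by lia.
  rewrite Cpow_add, IHm. reflexivity.
Qed.

Lemma abs4 p q r s : Rabs (p + q + r - s) <= Rabs p + Rabs q + Rabs r + Rabs s.
Proof.
  unfold Rminus. eapply Rle_trans. apply Rabs_triang. rewrite Rabs_Ropp.
  apply Rplus_le_compat_r. eapply Rle_trans. apply Rabs_triang.
  apply Rplus_le_compat_r. apply Rabs_triang.
Qed.

Lemma D_mul z u : D (Cmul z u) <= (1 + D z) * (1 + D u) - 1.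
Proof.
  destruct z as [zx zy], u as [ux uy]; unfold D, Cmul; simpl.
  set (dx := zx - 1). set (ex := ux - 1).
  replace (zx * ux - zy * uy - 1) with (dx + ex + dx * ex - zy * uy) by (unfold dx, ex; ring).
  replace (zx * uy + zy * ux) with (uy + zy + dx * uy - (- (zy * ex))) by (unfold dx, ex; ring).
  pose proof (abs4 dx ex (dx*ex) (zy*uy)).
  pose proof (abs4 uy zy (dx*uy) (-(zy*ex))).
  rewrite !Rabs_mult, Rabs_Ropp, Rabs_mult in *.
  pose proof (Rabs_pos dx). pose proof (Rabs_pos ex). pose proof (Rabs_pos zy). pose proof (Rabs_pos uy).
  nra.
Qed.

Lemma D_pow z n : D (Cpow z n) <= (1 + D z) ^ n - 1.
Proof.
  induction n; simpl.
  - unfold D, Cone; simpl. replace (1-1) with 0 by ring. rewrite Rabs_R0. lra.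
  - eapply Rle_trans. apply D_mul.
    assert (0 <= D z) by (unfold D; pose proof (Rabs_pos (Re z - 1)); pose proof (Rabs_pos (Im z)); lra).
    nra.
Qed.

Lemma pow_bound x n : 0 <= x -> INR n * x < 1 -> (1 + x) ^ n * (1 - INR n * x) <= 1.
Proof.
  intros Hx. induction n; intros Hn.
  - simpl. lra.
  - rewrite S_INR in *. simpl.
    assert (INR n * x < 1). { pose proof (pos_INR n). nra. }
    specialize (IHn H).
    assert (0 <= (1+x)^n) by (apply pow_le; lra).
    pose proof (pos_INR n).
    assert ((1 + x) * (1 - (INR n + 1) * x) <= 1 - INR n * x) by nra.
    nra.
Qed.

Lemma exp_sq y : Rabs y <= 1/8 -> Rabs (exp y ^ 2 - 1) <= 4 * Rabs y.
Proof.
  intros H. replace (exp y ^ 2) with (exp (2*y)) by (replace (2*y) with (y+y) by ring; rewrite exp_plus; ring).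
  pose proof (exp_ineq1_le (2*y)). pose proof (exp_ineq1_le (-(2*y))).
  assert (exp (2*y) * exp (-(2*y)) = 1) by (rewrite <- exp_plus; replace (2*y + -(2*y)) with 0 by ring; apply exp_0).
  pose proof (exp_pos (2*y)).
  apply Rabs_le. revert H. unfold Rabs; destruct (Rcase_abs y); intros; split; nra.
Qed.

Lemma abs_inv x e : Rabs x <= e -> -e <= x <= e.
Proof. unfold Rabs; destruct (Rcase_abs x); lra. Qed.

Lemma cube_bound a b s s' eps :
  a*a+b*b = 1+s -> (1+a)*(1+a)+b*b = 1+s' -> Rabs s <= eps -> Rabs s' <= eps ->
  eps <= 1/100 -> D (Cpow (mkC a b) 3) <= 16*eps.
Proof.
  intros H1 H2 Hs Hs' He.
  unfold D; simpl.
  apply abs_inv in Hs. apply abs_inv in Hs'.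
  assert (Ha : a = (s' - s - 1)/2) by nra.
  assert (Hb : b*b = 1 + s - a*a) by lra.
  replace (a * (a * (a * 1 - b * 0) - b * (a * 0 + b * 1)) -
    b * (a * (a * 0 + b * 1) + b * (a * 1 - b * 0)) - 1) with (a*a*a - 3*a*(b*b) - 1) by ring.
  replace (a * (a * (a * 0 + b * 1) + b * (a * 1 - b * 0)) +
    b * (a * (a * 1 - b * 0) - b * (a * 0 + b * 1))) with (b * (4*(a*a) - 1 - s)) by (replace s with (a*a+b*b-1) by lra; ring).
  rewrite Hb. subst a. set (t := s' - s).
  assert (Ht : -2*eps <= t <= 2*eps) by (unfold t; lra).
  clearbody t.
  assert (Hbb : Rabs b <= 2). { apply Rabs_le. nra. }
  rewrite Rabs_mult.
  assert (Q : Rabs (4 * ((t - 1) / 2 * ((t - 1) / 2)) - 1 - s) <= 6*eps).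
  { apply Rabs_le. split; nra. }
  assert (R1 : Rabs ((t - 1) / 2 * ((t - 1) / 2) * ((t - 1) / 2) -
     3 * ((t - 1) / 2) * (1 + s - (t - 1) / 2 * ((t - 1) / 2)) - 1) <= 4*eps).
  { apply Rabs_le. split; nra. }
  pose proof (Rabs_pos b). pose proof (Rabs_pos (4 * ((t - 1) / 2 * ((t - 1) / 2)) - 1 - s)).
  nra.
Qed.

Lemma iter_bound w (c d : R) (kp j : nat) :
  c = 1/400 -> d = c / 3 ^ kp -> (j <= kp)%nat ->
  D (Cpow w 3) <= 64 * d -> D (Cpow w (3 ^ S j)) <= 1/2.
Proof.
  intros Hc Hd Hj HD.
  change (3 ^ S j)%nat with (3 * 3 ^ j)%nat. rewrite Cpow_mul3.
  eapply Rle_trans. apply D_pow.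
  assert (H3 : 1 <= 3 ^ kp) by (apply pow_R1_Rle; lra).
  assert (Hd0 : 0 <= d) by (subst d; apply Rmult_le_pos; [lra| left; apply Rinv_0_lt_compat; lra]).
  assert (Hdk : d * 3 ^ kp = c) by (subst d; field; lra).
  assert (HDz : 0 <= D (Cpow w 3)) by (unfold D; pose proof (Rabs_pos (Re (Cpow w 3) - 1)); pose proof (Rabs_pos (Im (Cpow w 3))); lra).
  assert (Hm : INR (3 ^ j) <= 3 ^ kp).
  { rewrite pow_INR. replace (INR 3) with 3 by (simpl; ring). apply Rle_pow; [lra|exact Hj]. }
  pose proof (pos_INR (3 ^ j)).
  assert (Hnx : INR (3 ^ j) * (64 * d) <= 64 * c) by nra.
  pose proof (pow_bound (64*d) (3^j) ltac:(lra) ltac:(lra)).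
  assert ((1 + D (Cpow w 3)) ^ (3 ^ j) <= (1 + 64 * d) ^ (3 ^ j)) by (apply pow_incr; lra).
  assert (0 <= (1 + 64 * d) ^ (3 ^ j)) by (apply pow_le; lra).
  nra.
Qed.

Theorem lemma24 :
  exists c : R, 0 < c /\
  forall (k' : nat) (y1 y2 : R) (w1 w2 : Cplx),
    Rabs y1 <= c / 3 ^ k' ->
    Rabs y2 <= c / 3 ^ k' ->
    Cmod w1 = exp y1 ->
    Cmod w2 = exp y2 ->
    Cadd (Cadd Cone w1) w2 = Czero ->
    forall k : nat, (1 <= k <= k' + 1)%nat ->
      2 <= Re (Cadd (Cadd Cone (Cpow w1 (3 ^ k))) (Cpow w2 (3 ^ k))) /\
      2 <= Cmod (Cadd (Cadd Cone (Cpow w1 (3 ^ k))) (Cpow w2 (3 ^ k))).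
Proof.
  exists (1/400). split; [lra|].
  intros kp y1 y2 w1 w2 Hy1 Hy2 Hm1 Hm2 Hs k Hk.
  set (c := 1/400) in *. set (d := c / 3 ^ kp) in *.
  assert (H3 : 1 <= 3 ^ kp) by (apply pow_R1_Rle; lra).
  assert (Hd0 : 0 <= d) by (unfold d; apply Rmult_le_pos; [unfold c; lra| left; apply Rinv_0_lt_compat; lra]).
  assert (Hdk : d * 3 ^ kp = c) by (unfold d; field; lra).
  assert (Hd1 : d <= c) by (unfold c in *; nra).
  destruct w1 as [a b], w2 as [a2 b2].
  unfold Cadd, Cone, Czero in Hs; simpl in Hs. injection Hs as Hr Hi.
  unfold Cmod in Hm1, Hm2; simpl in Hm1, Hm2.
  assert (E1 : a*a+b*b = 1 + (exp y1 ^ 2 - 1)).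
  { rewrite <- Hm1, pow2_sqrt by nra. ring. }
  assert (E2 : a2*a2+b2*b2 = 1 + (exp y2 ^ 2 - 1)).
  { rewrite <- Hm2, pow2_sqrt by nra. ring. }
  assert (S1 : Rabs (exp y1 ^ 2 - 1) <= 4 * d) by (eapply Rle_trans; [apply exp_sq; unfold c in Hd1; lra | lra]).
  assert (S2 : Rabs (exp y2 ^ 2 - 1) <= 4 * d) by (eapply Rle_trans; [apply exp_sq; unfold c in Hd1; lra | lra]).
  assert (C1 : D (Cpow (mkC a b) 3) <= 16 * (4*d)).
  { eapply cube_bound. exact E1. 2: exact S1. 2: exact S2. 2: unfold c in Hd1; lra.
    rewrite <- E2. replace a2 with (-1-a) by lra. replace b2 with (-b) by lra. ring. }
  assert (C2 : D (Cpow (mkC a2 b2) 3) <= 16 * (4*d)).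
  { eapply cube_bound. exact E2. 2: exact S2. 2: exact S1. 2: unfold c in Hd1; lra.
    rewrite <- E1. replace a2 with (-1-a) by lra. replace b2 with (-b) by lra. ring. }
  destruct k as [|j]; [lia|].
  assert (Hj : (j <= kp)%nat) by lia.
  pose proof (iter_bound (mkC a b) c d kp j eq_refl eq_refl Hj ltac:(lra)) as B1.
  pose proof (iter_bound (mkC a2 b2) c d kp j eq_refl eq_refl Hj ltac:(lra)) as B2.
  revert B1 B2.
  set (u1 := Cpow (mkC a b) (3 ^ S j)). set (u2 := Cpow (mkC a2 b2) (3 ^ S j)).
  clearbody u1 u2. intros B1 B2.
  unfold D in B1, B2.
  pose proof (Rabs_pos (Im u1)). pose proof (Rabs_pos (Im u2)).
  assert (R1 : Rabs (Re u1 - 1) <= 1/2) by lra. apply abs_inv in R1.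
  assert (R2 : Rabs (Re u2 - 1) <= 1/2) by lra. apply abs_inv in R2.
  unfold Cadd, Cone, Cmod; simpl.
  split; [lra|].
  apply Rle_trans with (sqrt (2 ^ 2)).
  { rewrite sqrt_pow2 by lra. lra. }
  apply sqrt_le_1_alt.
  pose proof (pow2_ge_0 (0 + Im u1 + Im u2)). nra.
Qed.
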